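(* Let $x \in \{\text{complete}, \text{stable}, \text{grounded}, \text{preferred}, \text{ideal}, \text{semi-stable}, \text{eager}\}$ and let $\sigma$ be either the semantics $\sigma_x$ itself (credulous mode) or its skeptical mode $\sigma_x^{\cap}$. Then there exist argumentation frameworks $AF=(AR,Attacks)$ and $AF'=(AR',Attacks')$ with $AF \preceq_N AF'$ such that the following statement does NOT hold: $$\forall E \in \sigma(AF)\ \exists E' \in \sigma(AF') \text{ such that } (E' \not\subseteq AR \ \lor\ E' = E).$$
   Context: An argumentation framework is a pair $AF=(AR,Attacks)$ where $AR$ is a finite set (of arguments) and $Attacks \subseteq AR \times AR$; $a$ attacks $b$ iff $(a,b)\in Attacks$, and a set $S$ attacks $b$ iff some element of $S$ attacks $b$. An argumentation semantics $\sigma$ assigns to each argumentation framework $AF$ a set $\sigma(AF)$ of subsets of $AR$ (the $\sigma$-extensions). $AF'=(AR',Attacks')$ is a normal expansion of $AF=(AR,Attacks)$, written $AF\preceq_N AF'$, iff $AR\subseteq AR'$, $Attacks\subseteq Attacks'$, and there is no $(a,b)\in Attacks'\setminus Attacks$ with both $a\in AR$ and $b\in AR$. A set $S\subseteq AR$ is conflict-free iff no element of $S$ attacks an element of $S$. An argument $a$ is acceptable w.r.t. $S$ iff every attacker of $a$ is attacked by $S$. A conflict-free $S$ is admissible iff every element of $S$ is acceptable w.r.t. $S$. The range of $S$ is $S\cup S^+$ where $S^+=\{b\in AR: \text{some } a\in S \text{ attacks } b\}$. For an admissible set $S$: $S$ is a stable extension iff $S$ attacks every argument not in $S$; a preferred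 extension iff $S$ is $\subseteq$-maximal among admissible sets; a complete extension iff every argument acceptable w.r.t. $S$ belongs to $S$; the grounded extension iff $S$ is the $\subseteq$-minimal complete extension; the ideal extension iff $S$ is the $\subseteq$-maximal admissible set contained in every preferred extension; a semi-stable extension iff $S$ is a complete extension whose range is $\subseteq$-maximal among ranges of complete extensions; the eager extension iff $S$ is the $\subseteq$-maximal admissible set contained in every semi-stable extension. $\sigma_x(AF)$ is the set of all $x$-extensions of $AF$. The skeptical mode is $\sigma^{\cap}(AF)=\{\bigcap_{E\in\sigma(AF)}E\}$, with the convention that $\sigma^{\cap}(AF)=\emptyset$ when $\sigma(AF)=\emptyset$. *)

(* Defs.v *)
From mathcomp Require Import all_boot.
Set Implicit Arguments. Unset Strict Implicit. Unset Printing Implicit Defensive.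

Section AF.
Variable T : finType.

Definition wf_AF (AR : {set T}) (Att : {set T * T}) : bool :=
  Att \subset setX AR AR.

Definition attacks (Att : {set T * T}) (a b : T) : bool := (a, b) \in Att.

Definition set_attacks (Att : {set T * T}) (S : {set T}) (b : T) : bool :=
  [exists a in S, attacks Att a b].

Definition conflict_free (Att : {set T * T}) (S : {set T}) : bool :=
  [forall a in S, forall b in S, ~~ attacks Att a b].

Definition acceptable (AR : {set T}) (Att : {set T * T}) (S : {set T}) (a : T) : bool :=
  [forall b in AR, attacks Att b a ==> set_attacks Att S b].

Definition admissible (AR : {set T}) (Att : {set T * T}) (S : {set T}) : bool :=
  [&& S \subset AR, conflict_free Att S & [forall a in S, acceptable AR Att S a]].

Definition stable (AR : {set T}) (Att : {set T * T}) (S : {set T}) : bool :=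
  admissible AR Att S && [forall b in AR, (b \notin S) ==> set_attacks Att S b].

Definition preferred (AR : {set T}) (Att : {set T * T}) (S : {set T}) : bool :=
  admissible AR Att S &&
  [forall S' : {set T}, (admissible AR Att S' && (S \subset S')) ==> (S' == S)].

Definition complete (AR : {set T}) (Att : {set T * T}) (S : {set T}) : bool :=
  admissible AR Att S && [forall a in AR, acceptable AR Att S a ==> (a \in S)].

Definition grounded (AR : {set T}) (Att : {set T * T}) (S : {set T}) : bool :=
  complete AR Att S &&
  [forall S' : {set T}, (complete AR Att S' && (S' \subset S)) ==> (S' == S)].

Definition ideal (AR : {set T}) (Att : {set T * T}) (S : {set T}) : bool :=
  let P S' := admissible AR Att S' &&
              [forall E : {set T}, preferred AR Att E ==> (S' \subset E)] in
  P S && [forall S' : {set T}, (P S' && (S \subset S')) ==> (S' == S)].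

Definition range (AR : {set T}) (Att : {set T * T}) (S : {set T}) : {set T} :=
  S :|: [set b in AR | set_attacks Att S b].

Definition semi_stable (AR : {set T}) (Att : {set T * T}) (S : {set T}) : bool :=
  complete AR Att S &&
  [forall S' : {set T}, (complete AR Att S' &&
        (range AR Att S \subset range AR Att S')) ==>
        (range AR Att S' == range AR Att S)].

Definition eager (AR : {set T}) (Att : {set T * T}) (S : {set T}) : bool :=
  let P S' := admissible AR Att S' &&
              [forall E : {set T}, semi_stable AR Att E ==> (S' \subset E)] in
  P S && [forall S' : {set T}, (P S' && (S \subset S')) ==> (S' == S)].

End AF.

Inductive sem_kind :=
  | Complete | Stable | Grounded | Preferred | Ideal | SemiStable | Eager.

Inductive sem_mode := Credulous | Skeptical.

Definition sem_pred (k : sem_kind) {T : finType} (AR : {set T}) (Att : {set T * T})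
  : {set T} -> bool :=
  match k with
  | Complete => complete AR Att
  | Stable => stable AR Att
  | Grounded => grounded AR Att
  | Preferred => preferred AR Att
  | Ideal => ideal AR Att
  | SemiStable => semi_stable AR Att
  | Eager => eager AR Att
  end.

Definition sigma_x (k : sem_kind) {T : finType} (AR : {set T}) (Att : {set T * T})
  : {set {set T}} := [set E | sem_pred k AR Att E].

Definition sigma_cap (k : sem_kind) {T : finType} (AR : {set T}) (Att : {set T * T})
  : {set {set T}} :=
  let X := sigma_x k AR Att in
  if X == set0 then set0 else [set \bigcap_(E in X) E].

Definition sigma (m : sem_mode) (k : sem_kind) {T : finType}
  (AR : {set T}) (Att : {set T * T}) : {set {set T}} :=
  match m with
  | Credulous => sigma_x k AR Att
  | Skeptical => sigma_cap k AR Att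
  end.

Definition normal_expansion {T : finType} (AR : {set T}) (Att : {set T * T})
  (AR' : {set T}) (Att' : {set T * T}) : bool :=
  [&& AR \subset AR', Att \subset Att' &
      [forall p in Att' :\: Att, ~~ ((p.1 \in AR) && (p.2 \in AR))]].

(* Main.v *)
Require Import Defs.
From mathcomp Require Import all_boot.
Set Implicit Arguments. Unset Strict Implicit. Unset Printing Implicit Defensive.

Definition a0 : 'I_2 := Ordinal (isT : 0 < 2).
Definition a1 : 'I_2 := Ordinal (isT : 1 < 2).
Definition AR0 : {set 'I_2} := [set a0].
Definition Att0 : {set 'I_2 * 'I_2} := set0.
Definition AR1 : {set 'I_2} := setT.
Definition Att1 : {set 'I_2 * 'I_2} := [set (a1, a0); (a1, a1)].

Lemma I2 (x : 'I_2) : x = a0 \/ x = a1.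
Proof.
case: x => [[|[|n]] Hn]; first by left; apply/val_inj.
  by right; apply/val_inj.
by [].
Qed.

Lemma sem_adm k (T : finType) (AR : {set T}) Att S :
  sem_pred k AR Att S -> admissible AR Att S.
Proof.
case: k => /=.
- by case/andP.
- by case/andP.
- by case/andP => /andP[].
- by case/andP.
- by case/andP => /andP[].
- by case/andP => /andP[].
- by case/andP => /andP[].
Qed.

Lemma adm1 S : admissible AR1 Att1 S -> S = set0.
Proof.
case/and3P => _ /forall_inP cf /forall_inP acc.
have n1 : a1 \notin S.
  apply/negP => h; have := forall_inP (cf a1 h) a1 h.
  by rewrite /attacks !inE eqxx orbT.
apply/setP => x; rewrite in_set0; apply/negbTE/negP => xS.
case: (I2 x) => ex; subst x; last by rewrite xS in n1.
have := forall_inP (acc a0 xS) a1 (in_setT _).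
rewrite /attacks !inE eqxx /= => /existsP [a /andP [aS]].
case: (I2 a) => ea; subst a; last by rewrite aS in n1.
by rewrite /attacks ?inE.
Qed.

Lemma adm0_sub S : admissible AR0 Att0 S -> S \subset AR0.
Proof. by case/and3P. Qed.

Lemma adm0_eq S : admissible AR0 Att0 S -> AR0 \subset S -> S = AR0.
Proof. by move=> /adm0_sub h1 h2; apply/eqP; rewrite eqEsubset h1 h2. Qed.

Lemma admAR : admissible AR0 Att0 AR0.
Proof.
rewrite /admissible subxx /=; apply/andP; split.
  apply/forall_inP => a _; apply/forall_inP => b _; by rewrite /attacks in_set0.
apply/forall_inP => a _; apply/forall_inP => b _; by rewrite /attacks in_set0.
Qed.

Lemma comp0 S : complete AR0 Att0 S -> S = AR0.
Proof.
case/andP => ad /forall_inP H; apply: adm0_eq => //.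
rewrite sub1set; apply: (implyP (H a0 _)); first by rewrite !inE.
by apply/forall_inP => b _; rewrite /attacks in_set0.
Qed.

Lemma compAR : complete AR0 Att0 AR0.
Proof. by rewrite /complete admAR /=; apply/forall_inP => a aA; rewrite aA implybT. Qed.

Lemma pref0 S : preferred AR0 Att0 S <-> S = AR0.
Proof.
split.
  case/andP => ad /forallP H; have := H AR0; rewrite admAR adm0_sub //=.
  by move/eqP.
move=> ->; rewrite /preferred admAR; apply/forallP => S'.
by apply/implyP => /andP[h1 h2]; rewrite (adm0_eq h1 h2).
Qed.

Lemma semis0 S : semi_stable AR0 Att0 S <-> S = AR0.
Proof.
split; first by case/andP => /comp0.
move=> ->; rewrite /semi_stable compAR; apply/forallP => S'.
by apply/implyP => /andP[/comp0 -> _].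
Qed.

Lemma sem0 k S : sem_pred k AR0 Att0 S <-> S = AR0.
Proof.
case: k => /=.
- by split; [apply: comp0 | move=> ->; apply: compAR].
- split.
    case/andP => ad /forall_inP H; apply: adm0_eq => //.
    rewrite sub1set; have := H a0 (set11 _).
    by case: (a0 \in S) => //= /existsP [a /andP [_]]; rewrite /attacks in_set0.
  by move=> ->; rewrite /stable admAR; apply/forall_inP => b ->.
- split; first by case/andP => /comp0.
  move=> ->; rewrite /grounded compAR; apply/forallP => S'.
  by apply/implyP => /andP[/comp0 -> _].
- exact: pref0.
- split.
    case/andP => /andP [ad _] /forallP H; have := H AR0.
    rewrite admAR adm0_sub //= andbT.
    have -> : [forall E, preferred AR0 Att0 E ==> (AR0 \subset E)].
      by apply/forallP => E; apply/implyP => /pref0 ->.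
    by move/eqP.
  move=> ->; rewrite /ideal admAR /=; apply/andP; split.
    by apply/forallP => E; apply/implyP => /pref0 ->.
  apply/forallP => S'; apply/implyP => /andP [/andP [h1 _] h2].
  by rewrite (adm0_eq h1 h2).
- exact: semis0.
- split.
    case/andP => /andP [ad _] /forallP H; have := H AR0.
    rewrite admAR adm0_sub //= andbT.
    have -> : [forall E, semi_stable AR0 Att0 E ==> (AR0 \subset E)].
      by apply/forallP => E; apply/implyP => /semis0 ->.
    by move/eqP.
  move=> ->; rewrite /eager admAR /=; apply/andP; split.
    by apply/forallP => E; apply/implyP => /semis0 ->.
  apply/forallP => S'; apply/implyP => /andP [/andP [h1 _] h2].
  by rewrite (adm0_eq h1 h2).
Qed.

Lemma sx0 k : sigma_x k AR0 Att0 = [set AR0].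
Proof. by apply/setP => E; rewrite !inE; apply/idP/eqP => /sem0. Qed.

Lemma sx1 k : sigma_x k AR1 Att1 \subset [set set0].
Proof. by apply/subsetP => E; rewrite !inE => /sem_adm /adm1 ->. Qed.

Lemma AR0_neq0 : set0 <> AR0.
Proof. by move=> h; have := set11 a0; rewrite -/AR0 -h in_set0. Qed.

Theorem proposition37 (k : sem_kind) (m : sem_mode) :
  exists (n : nat) (AR AR' : {set 'I_n}) (Att Att' : {set 'I_n * 'I_n}),
    [/\ wf_AF AR Att, wf_AF AR' Att', normal_expansion AR Att AR' Att' &
      ~ (forall E, E \in sigma m k AR Att ->
           exists2 E', E' \in sigma m k AR' Att' &
                       (~~ (E' \subset AR) \/ E' = E))].
Proof.
exists 2, AR0, AR1, Att0, Att1; split.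
- by rewrite /wf_AF sub0set.
- by apply/subsetP => p _; rewrite !inE.
- rewrite /normal_expansion subsetT sub0set /=.
  apply/forall_inP => p; rewrite setD0 !inE => /orP [/eqP -> | /eqP ->] /=; by rewrite ?inE.
have key : forall E', E' \in sigma m k AR1 Att1 -> E' = set0.
  case: m => /= E'; first by move=> /(subsetP (sx1 k)); rewrite inE => /eqP.
  rewrite /sigma_cap; case: ifP => [_|]; first by rewrite inE.
  move: (sx1 k); rewrite subset1 => /orP [/eqP -> _|/eqP -> ]; last by rewrite eqxx.
  by rewrite big_set1 inE => /eqP.
have inE0 : AR0 \in sigma m k AR0 Att0.
  destruct m => /=; first by rewrite sx0 set11.
  rewrite /sigma_cap sx0; case: ifP => [/eqP h|_].
    by have := set11 AR0; rewrite h in_set0.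
  by rewrite big_set1 set11.
move=> H; have [E' /key -> []] := H _ inE0.
  by rewrite sub0set.
exact: AR0_neq0.
Qed.
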